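(* Let $n\ge 1$, $\lambda_s>0$, $\lambda>0$ and let $n_0\ge 2$. In the line network $L(n_0)$ (with parameter $n$), for every integer $i$ with $1\le i\le \frac{n_0}{2}$ we have $$\Delta^{\ell(n_0)}_{i+1}\le \Delta^{\ell(n_0)}_{i}.$$
   Context: Version-age model. A gossip network on a finite node set $\mathcal N$ is specified by source rates $\lambda_{0j}>0$ ($j\in\mathcal N$) and gossip rates $\lambda_{ij}\ge 0$ for ordered pairs $i\neq j$ in $\mathcal N$ ($\lambda_{ij}$ is the rate at which node $i$ sends updates to node $j$); $\lambda_s>0$ is the source's own update rate. For nonempty $S\subseteq\mathcal N$ let $N(S)=\{i\in\mathcal N\setminus S:\ \sum_{j\in S}\lambda_{ij}>0\}$. The version ages $\Delta_S$ ($\emptyset\neq S\subseteq\mathcal N$) are the numbers defined by $$\Delta_S=\frac{\lambda_s+\sum_{i\in N(S)}\big(\sum_{j\in S}\lambda_{ij}\big)\Delta_{S\cup\{i\}}}{\sum_{j\in S}\lambda_{0j}+\sum_{i\in N(S)}\sum_{j\in S}\lambda_{ij}},$$ which is well defined by downward induction on $|S|$ (all sets on the right are strictly larger than $S$). Write $\Delta_i=\Delta_{\{i\}}$. Line network $L(n_0)$ with parameter $n$: node set $\{1,\dots,n_0\}$, $\lambda_{0j}=\lambda/n$ for all $j$, $\lambda_{i,i+1}=\lambda_{i+1,i}=\lambda/2$ for $1\le i\le n_0-1$, and all other $\lambda_{ij}=0$. $\Delta^{\ell(n_0)}_i$ denotes $\Delta_i$ in this network. *)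

(* Defs.v *)
From HB Require Import structures.
From mathcomp Require Import all_boot all_order all_algebra.
Set Implicit Arguments. Unset Strict Implicit. Unset Printing Implicit Defensive.
Import Order.TTheory GRing.Theory Num.Theory.
Local Open Scope ring_scope.

(* A gossip network on a finite node set T over an ordered field R:
   lam0 j  = source rate lambda_{0j}, lamg i j = gossip rate lambda_{ij},
   lams    = source update rate lambda_s. *)
Section VersionAge.
Variables (R : realFieldType) (T : finType).
Variables (lams : R) (lam0 : T -> R) (lamg : T -> T -> R).

Definition rate_into (S : {set T}) (i : T) : R := \sum_(j in S) lamg i j.

Definition nbr (S : {set T}) : {set T} :=
  [set i | (i \notin S) && (0 < rate_into S i)].

Fixpoint age_fuel (k : nat) (S : {set T}) : R :=
  match k with
  | 0%N => 0
  | k'.+1 =>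
      (lams + \sum_(i in nbr S) rate_into S i * age_fuel k' (i |: S)) /
      (\sum_(j in S) lam0 j + \sum_(i in nbr S) rate_into S i)
  end.

(* Version age Delta_S: fuel #|T| - #|S| + 1 suffices, since each recursive
   call goes to a set one element larger, and N(T) is empty. *)
Definition version_age (S : {set T}) : R := age_fuel (#|T| - #|S|).+1 S.
End VersionAge.

(* Line network L(n0) with parameter n; node k (1-indexed) is the ordinal k-1. *)
Definition line_lam0 (R : realFieldType) (n n0 : nat) (lam : R) : 'I_n0 -> R :=
  fun _ => lam / n%:R.
Definition line_lamg (R : realFieldType) (n0 : nat) (lam : R) : 'I_n0 -> 'I_n0 -> R :=
  fun i j => if ((i : nat).+1 == j) || ((j : nat).+1 == i) then lam / 2 else 0.

Definition line_age (R : realFieldType) (n n0 : nat) (lams lam : R) (i : 'I_n0) : R :=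
  version_age lams (line_lam0 n lam) (line_lamg lam) [set i].

(* Main.v *)
Require Import Defs.
From HB Require Import structures.
From mathcomp Require Import all_boot all_order all_algebra.
From mathcomp Require Import zify ring lra.
Set Implicit Arguments. Unset Strict Implicit. Unset Printing Implicit Defensive.
Import Order.TTheory GRing.Theory Num.Theory.
Local Open Scope ring_scope.

Definition qq (R : realFieldType) (n0 : nat) (c lam : R) (a b : nat) : R :=
  (n0 - (a + b))%:R * c + (if (0 < a)%N then lam / 2 else 0)
  + (if (0 < b)%N then lam / 2 else 0).

Definition rec_ok (R : realFieldType) (n0 : nat) (c lams lam : R) (h : nat -> nat -> R) :=
  forall a b, (a + b < n0)%N -> h a b * qq n0 c lam a b =
    lams + (if (0 < a)%N then lam / 2 * h a.-1 b else 0)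
         + (if (0 < b)%N then lam / 2 * h a b.-1 else 0).

Lemma qq_pos (R : realFieldType) n0 (c lam : R) a b :
  0 < c -> 0 < lam -> (a + b < n0)%N -> 0 < qq n0 c lam a b.
Proof.
move=> hc hl hab; rewrite /qq.
have h1 : 0 < (n0 - (a + b))%:R * c :> R.
  by rewrite mulr_gt0 // ltr0n subn_gt0.
have h2 : 0 <= lam / 2 by rewrite divr_ge0 // ltW.
by case: (0 < a)%N; case: (0 < b)%N; lra.
Qed.

Lemma sym_h (R : realFieldType) n0 (c lams lam : R) h :
  0 < c -> 0 < lam -> rec_ok n0 c lams lam h ->
  forall m a b, (a + b = m)%N -> (m < n0)%N -> h a b = h b a.
Proof.
move=> hc hl E; elim=> [|m IH] a b hab hm.
  by move: hab => /eqP; rewrite addn_eq0 => /andP[/eqP-> /eqP->].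
have Ea := E a b; have Eb := E b a.
rewrite hab in Ea; rewrite addnC hab in Eb.
move: (Ea hm) (Eb hm) => {}Ea {}Eb.
have hq : qq n0 c lam a b = qq n0 c lam b a by rewrite /qq addnC; lra.
have qp := @qq_pos _ n0 c lam a b hc hl ltac:(by rewrite hab).
apply: (mulIf (lt0r_neq0 qp)).
rewrite Ea hq Eb.
case: a hab {Ea Eb hq qp} => [|a] hab; case: b hab => [|b] hab //=.
- rewrite (IH 0%N b); [lra|lia|lia].
- rewrite (IH a 0%N); [lra|lia|lia].
- rewrite (IH a b.+1) ?(IH a.+1 b); try lia. lra.
Qed.

Lemma monL (R : realFieldType) n0 (c lams lam : R) h :
  0 < c -> 0 < lam -> 0 < lams -> rec_ok n0 c lams lam h ->
  forall m a b, (a + b = m)%N -> (m < n0)%N ->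
    0 <= h a b /\ ((0 < a)%N -> h a.-1 b <= h a b).
Proof.
move=> hc hl hs E; elim=> [|m IH] a b hab hm.
  move: hab => /eqP; rewrite addn_eq0 => /andP[/eqP-> /eqP->].
  split=> //.
  have := E 0%N 0%N hm; rewrite /qq /= => e.
  have qp : 0 < (n0 - 0)%:R * c :> R by rewrite mulr_gt0 // ltr0n subn_gt0.
  nra.
have Eab := E a b ltac:(by rewrite hab).
have qp := @qq_pos _ n0 c lam a b hc hl ltac:(by rewrite hab).
have hK : 0 <= (n0 - (a + b))%:R * c :> R by rewrite mulr_ge0 // ltW.
have hl2 : 0 < lam / 2 by rewrite divr_gt0.
split.
  move: Eab qp hK; rewrite /qq.
  case: a hab => [|a] hab; case: b hab => [|b] hab /= => e q k.
  - nra.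
  - have [p1 _] := IH 0%N b ltac:(lia) ltac:(lia); nra.
  - have [p1 _] := IH a 0%N ltac:(lia) ltac:(lia); nra.
  - have [p1 _] := IH a b.+1 ltac:(lia) ltac:(lia).
    have [p2 _] := IH a.+1 b ltac:(lia) ltac:(lia); nra.
case: a hab Eab qp hK => [|a] hab Eab qp hK // _ /=.
have Ez := E a b ltac:(lia).
have eK : (n0 - (a + b))%N = (n0 - (a.+1 + b)).+1 by lia.
move: Eab Ez qp hK; rewrite /qq eK -[(n0 - (a.+1 + b)).+1%:R]natr1.
move: (ler0n R (n0 - (a.+1 + b))); move: ((n0 - (a.+1 + b))%:R) => K K0.
clear eK.
have [z0 zm] := IH a b ltac:(lia) ltac:(lia).
case: a hab z0 zm => [|a] hab z0 zm; case: b hab z0 zm => [|b] hab z0 zm /= => e1 e2 q k.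
- nra.
- have [_ pq] := IH 1%N b ltac:(lia) ltac:(lia); move: pq => /(_ isT) /= pq. nra.
- move: zm => /(_ isT) /= zm; nra.
- move: zm => /(_ isT) /= zm.
  have [_ pq] := IH a.+2 b ltac:(lia) ltac:(lia); move: pq => /(_ isT) /= pq. nra.
Qed.

Lemma cen (R : realFieldType) n0 (c lams lam : R) h :
  0 < c -> 0 < lam -> 0 < lams -> rec_ok n0 c lams lam h ->
  forall m a b, (a + b = m)%N -> (m < n0)%N -> (a.+1 <= b)%N ->
    h a.+1 b.-1 <= h a b.
Proof.
move=> hc hl hs E.
have S := sym_h hc hl E.
have M := monL hc hl hs E.
have hl2 : 0 < lam / 2 by rewrite divr_gt0.
elim=> [|m IH] a b hab hm hb; first by lia.
case: a hab hb => [|a] hab hb.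
  case: b hab hb => [|[|b]] hab hb //.
    by rewrite (S 1%N 1%N 0%N) //; lia.
  have Y := IH 0%N b.+1 ltac:(lia) ltac:(lia) ltac:(lia).
  have [X0 _] := M m 0%N b.+1 ltac:(lia) ltac:(lia).
  have XM : h 0%N b.+1 <= h 0%N b.+2.
    rewrite (S m.+1 0%N b.+2) ?(S m 0%N b.+1) //; try lia.
    by have [_ ->] := M m.+1 b.+2 0%N ltac:(lia) ltac:(lia).
  have [Y0 _] := M m 1%N b ltac:(lia) ltac:(lia).
  have e1 := E 1%N b.+1 ltac:(lia).
  have e2 := E 0%N b.+2 ltac:(lia).
  move: e1 e2; rewrite /qq /=.
  have -> : (1 + b.+1 = 0 + b.+2)%N by lia.
  move: (ler0n R (n0 - (0 + b.+2))); move: ((n0 - (0 + b.+2))%:R) => K K0 e1 e2 /=.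
  have k : 0 <= K * c by rewrite mulr_ge0 // ltW.
  nra.
case: b hab hb => [|b] hab hb; first by lia.
rewrite /=.
have e1 := E a.+2 b ltac:(lia).
have e2 := E a.+1 b.+1 ltac:(lia).
have hq : qq n0 c lam a.+2 b = qq n0 c lam a.+1 b.+1.
  rewrite /qq; have -> : (a.+2 + b = a.+1 + b.+1)%N by lia.
  by case: b {e1 e2 IH} hab hb => [|b] hab hb //=.
have qp := @qq_pos _ n0 c lam a.+1 b.+1 hc hl ltac:(lia).
have C : h a.+2 b.-1 <= h a b.+1.
  have C2 : h a.+1 b <= h a b.+1 by apply: (IH a b.+1); lia.
  case: (ltnP a.+1 b) => hab2.
    by apply: le_trans C2; apply: (IH a.+1 b); lia.
  have eb : b = a.+1 by lia.
  by rewrite eb /= (S m a.+2 a); [exact: lexx|lia|lia].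
have pb : (0 < b)%N by lia.
move: e1 e2; rewrite hq /= pb => e1 e2.
rewrite -(ler_pM2r qp) e1 e2; nra.
Qed.

Definition Iv (m l r : nat) : {set 'I_m.+1} := [set x : 'I_m.+1 | (l <= x) && (x <= r)]%N.

Lemma pick_sum (R : realFieldType) m (A : pred 'I_m.+1) (F : 'I_m.+1 -> R) x :
  (x <= m)%N -> inord x \in A ->
  \sum_(j in A) (if (j : nat) == x then F j else 0) = F (inord x).
Proof.
move=> hx hA; rewrite (bigD1 (inord x)) //= inordK // eqxx big1 ?addr0 //.
move=> j /andP[_ hj]; rewrite ifF //; apply: contraNF hj => /eqP hj.
by apply/eqP/val_inj; rewrite /= inordK.
Qed.

Lemma zero_sum (R : realFieldType) m (A : pred 'I_m.+1) (F : 'I_m.+1 -> R) (P : pred 'I_m.+1) :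
  (forall j, j \in A -> ~~ P j) ->
  \sum_(j in A) (if P j then F j else 0) = 0.
Proof. by move=> H; rewrite big1 // => j /H /negbTE ->. Qed.

Lemma card_Iv m d : forall l, (l + d <= m)%N -> #|Iv m l (l + d)| = d.+1.
Proof.
elim: d => [|d IH] l hl.
  have -> : Iv m l (l + 0) = [set inord l].
    apply/setP => x; rewrite !inE -val_eqE /= inordK; last by lia.
    lia.
  by rewrite cards1.
have -> : Iv m l (l + d.+1) = inord l |: Iv m l.+1 (l.+1 + d).
  apply/setP => x; rewrite !inE -val_eqE /= inordK; last by lia.
  lia.
rewrite cardsU1 IH; last by lia.
by rewrite !inE inordK ?ltnn //; lia.
Qed.

Lemma rate_Iv (R : realFieldType) m (lam : R) l r (i : 'I_m.+1) :
  (l <= r <= m)%N -> i \notin Iv m l r ->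
  rate_into (line_lamg lam) (Iv m l r) i =
  (if (i : nat).+1 == l then lam / 2 else 0) + (if (i : nat) == r.+1 then lam / 2 else 0).
Proof.
move=> hlr hi; rewrite /rate_into /line_lamg.
have hi' : ~~ ((l <= i) && (i <= r))%N by move: hi; rewrite inE.
rewrite (eq_bigr (fun j : 'I_m.+1 =>
   (if (j : nat) == l then (if (i : nat).+1 == l then lam / 2 else 0) else 0) +
   (if (j : nat) == r then (if (i : nat) == r.+1 then lam / 2 else 0) else 0))).
  rewrite big_split /= !pick_sum ?inE ?inordK //; lia.
move=> j; rewrite inE => hj.
case E1: ((i:nat).+1 == j); case E2: ((j:nat).+1 == i); case E3: ((j:nat)==l);
  case E4: ((i:nat).+1 == l); case E5: ((j:nat) == r); case E6: ((i:nat) == r.+1) => /=;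
  rewrite ?addr0 ?add0r //; lia.
Qed.

Lemma lamg_ge0 (R : realFieldType) m (lam : R) (i j : 'I_m.+1) :
  0 < lam -> 0 <= line_lamg lam i j.
Proof.
move=> hl; rewrite /line_lamg; case: ifP => // _.
by rewrite divr_ge0 // ltW.
Qed.

Lemma nbr_sum (R : realFieldType) m (lam : R) l r (G : 'I_m.+1 -> R) :
  0 < lam -> (l <= r <= m)%N ->
  \sum_(i in nbr (line_lamg lam) (Iv m l r)) rate_into (line_lamg lam) (Iv m l r) i * G i =
  (if (0 < l)%N then lam / 2 * G (inord l.-1) else 0) +
  (if (r < m)%N then lam / 2 * G (inord r.+1) else 0).
Proof.
move=> hl hlr; set S := Iv m l r.
have -> : \sum_(i in nbr (line_lamg lam) S) rate_into (line_lamg lam) S i * G i =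
          \sum_(i in ~: S) rate_into (line_lamg lam) S i * G i.
  rewrite big_mkcond [RHS]big_mkcond; apply: eq_bigr => i _.
  rewrite /nbr in_set in_setC.
  case: (boolP (i \in S)) => //= hiS.
  case: ifP => // hr.
  have h0 : 0 <= rate_into (line_lamg lam) S i.
    by apply: sumr_ge0 => j _; apply: lamg_ge0.
  have -> : rate_into (line_lamg lam) S i = 0.
    by apply/eqP; rewrite eq_le h0 andbT leNgt hr.
  by rewrite mul0r.
rewrite (eq_bigr (fun i : 'I_m.+1 =>
   (if (i : nat).+1 == l then lam / 2 * G i else 0) +
   (if (i : nat) == r.+1 then lam / 2 * G i else 0))); last first.
  move=> i; rewrite inE => hi; rewrite rate_Iv //.
  by rewrite mulrDl; case: ifP; case: ifP; rewrite ?mul0r ?add0r ?addr0.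
rewrite big_split /=; congr (_ + _).
  rewrite /S; clear S; case: l hlr => [|l] hlr /=.
    by rewrite big1 // => j _.
  rewrite (eq_bigr (fun i : 'I_m.+1 => if (i:nat) == l then lam / 2 * G i else 0)) //.
  by rewrite pick_sum // ?inE ?inordK //; lia.
case: ltnP => hrm.
  by rewrite pick_sum // ?inE ?inordK //; lia.
rewrite big1 // => j _; rewrite ifF //; have := ltn_ord j; lia.
Qed.

Lemma card_Iv' m l r : (l <= r <= m)%N -> #|Iv m l r| = (r.+1 - l)%N.
Proof.
move=> h; have := @card_Iv m (r - l) l; rewrite subnKC; last by lia.
move=> ->; lia.
Qed.

Lemma Iv_addl m l r : (0 < l <= r)%N -> (r <= m)%N ->
  inord l.-1 |: Iv m l r = Iv m l.-1 r.
Proof.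
move=> h1 h2; apply/setP => x; rewrite !inE -val_eqE /= inordK; last by lia.
lia.
Qed.

Lemma Iv_addr m l r : (l <= r)%N -> (r < m)%N ->
  inord r.+1 |: Iv m l r = Iv m l r.+1.
Proof.
move=> h1 h2; apply/setP => x; rewrite !inE -val_eqE /= inordK; last by lia.
lia.
Qed.

Lemma age_fuel_S (R : realFieldType) (T : finType) (lams : R) lam0 lamg k (S : {set T}) :
  age_fuel lams lam0 lamg k.+1 S =
  (lams + \sum_(i in nbr lamg S) rate_into lamg S i * age_fuel lams lam0 lamg k (i |: S)) /
  (\sum_(j in S) lam0 j + \sum_(i in nbr lamg S) rate_into lamg S i).
Proof. by []. Qed.

Definition gg (R : realFieldType) (n m : nat) (lams lam : R) (a b : nat) : R :=
  version_age lams (line_lam0 n lam : 'I_m.+1 -> R) (line_lamg lam) (Iv m a (m - b)).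

Lemma gg_fuel (R : realFieldType) (n m : nat) (lams lam : R) a b : (a + b <= m)%N ->
  gg n m lams lam a b =
  age_fuel lams (line_lam0 n lam : 'I_m.+1 -> R) (line_lamg lam) (a + b).+1 (Iv m a (m - b)).
Proof.
move=> h; rewrite /gg /version_age card_ord card_Iv'; last by lia.
by have -> : (m.+1 - ((m - b).+1 - a) = a + b)%N by lia.
Qed.

Lemma gg_rec (R : realFieldType) (n m : nat) (lams lam : R) :
  (1 <= n)%N -> 0 < lam ->
  rec_ok m.+1 (lam / n%:R) lams lam (gg n m lams lam).
Proof.
move=> hn hl a b hab.
rewrite gg_fuel; last by lia.
rewrite age_fuel_S nbr_sum //; last by lia.
rewrite sumr_const card_Iv'; last by lia.
under eq_bigr do rewrite -[rate_into _ _ _]mulr1.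
rewrite nbr_sum //; last by lia.
have hq : (line_lam0 n lam : 'I_m.+1 -> R) ord0 *+ ((m - b).+1 - a) +
   ((if (0 < a)%N then lam / 2 * 1 else 0) + (if (m - b < m)%N then lam / 2 * 1 else 0))
   = qq m.+1 (lam / n%:R) lam a b.
  rewrite /qq /line_lam0 -[_ *+ _]mulr_natl !mulr1.
  have -> : ((m - b).+1 - a = m.+1 - (a + b))%N by lia.
  have -> : (m - b < m)%N = (0 < b)%N by lia.
  by rewrite addrA.
rewrite hq divfK; last by apply: lt0r_neq0; apply: qq_pos; rewrite ?divr_gt0 ?ltr0n.
have -> : (m - b < m)%N = (0 < b)%N by lia.
rewrite addrA; congr (_ + _ + _).
  case: a hab {hq} => [|a] hab //.
  rewrite Iv_addl; try lia.
  by rewrite gg_fuel ?addSn //; lia.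
case: b hab {hq} => [|b] hab //.
rewrite Iv_addr; try lia.
rewrite gg_fuel ?addnS; last by lia.
by have -> : ((m - b.+1).+1 = m - b)%N by lia.
Qed.

Lemma line_age_gg (R : realFieldType) n m (lams lam : R) (a : 'I_m.+1) :
  line_age n lams lam a = gg n m lams lam a (m - a).
Proof.
rewrite /line_age /gg; congr version_age.
apply/setP => x; rewrite !inE -val_eqE /=.
have := ltn_ord a; have := ltn_ord x; lia.
Qed.

Theorem theorem1 (R : realFieldType) (n n0 : nat) (lams lam : R)
  (hn : (1 <= n)%N) (hlams : 0 < lams) (hlam : 0 < lam) (hn0 : (2 <= n0)%N)
  (a b : 'I_n0) (hab : nat_of_ord b = (nat_of_ord a).+1)
  (hi : (2 * (nat_of_ord a).+1 <= n0)%N) :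
  line_age n lams lam b <= line_age n lams lam a.
Proof.
case: n0 hn0 a b hab hi => [|m] // hn0 a b hab hi.
rewrite !line_age_gg hab.
have hc : 0 < lam / n%:R by rewrite divr_gt0 // ltr0n.
have E := @gg_rec R n m lams lam hn hlam.
have := @cen R m.+1 _ _ _ _ hc hlam hlams E (a + (m - a)) a (m - a) erefl.
have := ltn_ord a; have -> : ((m - a).-1 = m - a.+1)%N by lia.
move=> ha; apply; lia.
Qed.
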